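(* Let $F\in\mathbb{R}[x]$, $\delta\in\mathbb{R}$, and $Q=F\circ x^2\circ(x-\delta)$, with $n=\deg Q\ge6$. 1) If $Ch_2(Q)=Ch_3(Q)=0$, then either $\delta=0$ or $(2\delta)^2=\dfrac{3}{(n-1)(n-2)}$. 2) If $Ch_2(Q)=Ch_4(Q)=Ch_5(Q)=0$, then either $\delta=0$ or $t=2\delta$ satisfies $$\frac{2}{15}(n-1)(n-2)(n-3)(n-4)t^4-(n-2)(n-3)t^2+1=0.$$
   Context: $T_k$ denotes the Chebyshev polynomial of the first kind of degree $k$, $T_k(\cos\phi)=\cos(k\phi)$. Every real polynomial $Q$ of degree $n$ can be uniquely written as $Q=\sum_{k=0}^n d_kT_k$ with $d_k\in\mathbb{R}$; set $Ch_i(Q)=d_{n-i}$ for $0\le i\le n$. $\circ$ denotes composition, so $Q(x)=F((x-\delta)^2)$. *)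

(* Defs.v *)
From HB Require Import structures.
From mathcomp Require Import all_boot all_order all_algebra.
Set Implicit Arguments. Unset Strict Implicit. Unset Printing Implicit Defensive.
Import Order.TTheory GRing.Theory Num.Theory.
Local Open Scope ring_scope.

Section Cheb.
Variable R : realFieldType.

(* cheb_pair k = (T_k, T_{k+1}) *)
Fixpoint cheb_pair (k : nat) : {poly R} * {poly R} :=
  match k with
  | 0%N => (1, 'X)
  | k'.+1 => let: (a, b) := cheb_pair k' in (b, 2%:R *: 'X * b - a)
  end.

Definition cheb (k : nat) : {poly R} := (cheb_pair k).1.

(* Coefficient of T_k in the (unique) Chebyshev expansion of p, computed by
   the standard greedy algorithm: peel off the leading term with T_deg. *)
Fixpoint cheb_coef_fuel (fuel : nat) (p : {poly R}) (k : nat) : R :=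
  match fuel with
  | 0%N => 0
  | f.+1 =>
      let m := (size p).-1 in
      let c := lead_coef p / lead_coef (cheb m) in
      if k == m then c else cheb_coef_fuel f (p - c *: cheb m) k
  end.

Definition cheb_coef (p : {poly R}) (k : nat) : R := cheb_coef_fuel (size p) p k.

(* Ch_i(Q) = d_{n-i} where n = deg Q and Q = sum_k d_k T_k *)
Definition Ch (i : nat) (Q : {poly R}) : R := cheb_coef Q ((size Q).-1 - i).
End Cheb.

(* Main.v *)
Require Import Defs.
From HB Require Import structures.
From mathcomp Require Import all_boot all_order all_algebra.
From mathcomp Require Import ring lra zify.
Import Order.TTheory GRing.Theory Num.Theory.
Local Open Scope ring_scope.
Set Implicit Arguments. Unset Strict Implicit.

Section S.
Variable R : realFieldType.
Local Notation cheb := (@cheb R).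

Lemma cheb0 : cheb 0 = 1. Proof. by []. Qed.
Lemma cheb1 : cheb 1 = 'X. Proof. by []. Qed.
Lemma chebSS k : cheb k.+2 = 2%:R *: 'X * cheb k.+1 - cheb k.
Proof. by rewrite /Defs.cheb /=; case: (cheb_pair R k). Qed.

Lemma coef_chebSS0 k : (cheb k.+2)`_0 = - (cheb k)`_0.
Proof. by rewrite chebSS coefB -scalerAl coefZ coefXM /= mulr0 sub0r. Qed.
Lemma coef_chebSS k i : (cheb k.+2)`_i.+1 = 2%:R * (cheb k.+1)`_i - (cheb k)`_i.+1.
Proof. by rewrite chebSS coefB -scalerAl coefZ coefXM. Qed.

Lemma cheb_ind (P : nat -> Prop) : P 0%N -> P 1%N -> (forall k, P k -> P k.+1 -> P k.+2) ->
  forall k, P k.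
Proof.
move=> h0 h1 hS k; suff: P k /\ P k.+1 by case.
by elim: k => [|k [a b]]; split => //; apply: hS.
Qed.

Lemma cheb_odd j i : odd (j + i) -> (cheb j)`_i = 0.
Proof.
elim/cheb_ind: j i => [i|i|k IH1 IH2 i].
- by rewrite cheb0 coefC; case: i.
- by rewrite cheb1 coefX; case: i => [|[|i]].
- case: i => [|i] Ho.
  + by rewrite coef_chebSS0 IH1 ?oppr0 //; move: Ho; rewrite !addn0 /= => /negbNE.
  + rewrite coef_chebSS IH1 ?IH2 ?mulr0 ?subr0 //.
    * by move: Ho; rewrite !(addSn, addnS) /= !negbK.
    * by move: Ho; rewrite !(addSn, addnS) /= !negbK.
Qed.

Lemma cheb_gt j i : (j < i)%N -> (cheb j)`_i = 0.
Proof.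
elim/cheb_ind: j i => [i|i|k IH1 IH2 i].
- by rewrite cheb0 coefC; case: i.
- by rewrite cheb1 coefX; case: i => [|[|i]].
- case: i => [|i] // Hi.
  rewrite coef_chebSS IH1 ?IH2 ?mulr0 ?subr0 //; lia.
Qed.

Lemma cheb_top j : (cheb j.+1)`_j.+1 = 2%:R ^+ j.
Proof.
elim: j => [|j IH]; first by rewrite cheb1 coefX.
by rewrite coef_chebSS IH cheb_gt // subr0 exprS.
Qed.

Lemma cheb_lead j : (cheb j)`_j != 0.
Proof. case: j => [|j]; first by rewrite cheb0 coefC oner_eq0.
by rewrite cheb_top expf_neq0 // pnatr_eq0. Qed.

Lemma size_cheb j : size (cheb j) = j.+1.
Proof.
apply/eqP; rewrite eqn_leq; apply/andP; split.
  by apply/leq_sizeP => i Hi; apply: cheb_gt.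
by rewrite ltnNge; apply/negP => /leq_sizeP/(_ j (leqnn _))/eqP; apply/negP; apply: cheb_lead.
Qed.

Lemma cheb_sub2 j : (cheb j.+2)`_j = - (j.+2)%:R * 2%:R ^+ j.+1 / 4%:R.
Proof.
elim: j => [|j IH].
  rewrite coef_chebSS0 cheb0 coefC /=; field.
  by [].
rewrite coef_chebSS IH cheb_top !exprS -addn1 natrD; by field.
Qed.

Lemma cheb_sub4 j : (cheb j.+4)`_j = (j.+4)%:R * (j.+1)%:R * 2%:R ^+ j.+3 / 32%:R.
Proof.
elim: j => [|j IH].
  by rewrite !coef_chebSS0 cheb0 coefC /=; field.
rewrite coef_chebSS IH cheb_sub2 !exprS !mulrS.
by field.
Qed.

Definition chsum (d : nat -> R) N : {poly R} := \sum_(j < N) d j *: cheb j.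

Lemma chsumS d N : chsum d N.+1 = chsum d N + d N *: cheb N.
Proof. by rewrite /chsum big_ord_recr. Qed.

Lemma size_chsum d N M : (forall j, (M <= j)%N -> d j = 0) -> (size (chsum d N) <= M)%N.
Proof.
move=> H; elim: N => [|N IH]; first by rewrite /chsum big_ord0 size_poly0.
rewrite chsumS; apply: leq_trans (size_polyD _ _) _; rewrite geq_max IH /=.
case: (ltnP N M) => HN; first by apply: leq_trans (size_scale_leq _ _) _; rewrite size_cheb.
by rewrite H // scale0r size_poly0.
Qed.

Lemma chsum_ext d d' N : (forall j, (j < N)%N -> d j = d' j) -> chsum d N = chsum d' N.
Proof. by move=> H; apply: eq_bigr => i _; rewrite H. Qed.

Lemma chsum_high N d : (forall j, (N <= j)%N -> d j = 0) ->
  forall j, (size (chsum d N) <= j)%N -> d j = 0.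
Proof.
elim: N d => [|N IH] d Hd j Hj; first by apply: Hd.
case: (ltnP N j) => HNj; first by apply: Hd.
pose d'' := fun i => if i == N then 0 else d i.
have E : chsum d N = chsum d'' N by apply: chsum_ext => i Hi; rewrite /d'' ifN // neq_ltn Hi.
have Hd'' : forall i, (N <= i)%N -> d'' i = 0.
  by move=> i Hi; rewrite /d''; case: eqP => // /eqP HiN; apply: Hd; rewrite ltn_neqAle eq_sym HiN.
have Hs : (size (chsum d N) <= N)%N by rewrite E; apply: size_chsum.
have HdN : d N = 0.
  have : (chsum d N.+1)`_N = 0.
    by move/leq_sizeP: (leq_trans Hj HNj); apply.
  rewrite chsumS coefD coefZ (leq_sizeP _ _ Hs) // add0r.
  by move/eqP; rewrite mulf_eq0 (negbTE (cheb_lead N)) orbF => /eqP.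
have Hj' : (size (chsum d'' N) <= j)%N by rewrite -E; move: Hj; rewrite chsumS HdN scale0r addr0.
have := IH d'' Hd'' j Hj'; rewrite /d''; case: eqP => [->|] //.
Qed.

Lemma chsum_eq0 N d : (forall j, (N <= j)%N -> d j = 0) -> chsum d N = 0 -> forall j, d j = 0.
Proof. move=> Hd H0 j; apply: (chsum_high Hd); by rewrite H0 size_poly0. Qed.

Lemma chsum_split d N M : (M < N)%N ->
  chsum d N = d M *: cheb M + chsum (fun j => if j == M then 0 else d j) N.
Proof.
move=> HM; rewrite /chsum (bigD1 (Ordinal HM)) //= [X in _ = _ + X](bigD1 (Ordinal HM)) //=.
rewrite eqxx scale0r add0r; congr (_ + _); apply: eq_bigr => i Hi.
by rewrite ifN //; apply: contra Hi => /eqP Hi; apply/eqP/val_inj.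
Qed.

Lemma greedy fuel : forall (p : {poly R}) d N (k : nat), (size p <= fuel)%N -> (forall j, (N <= j)%N -> d j = 0) ->
  p = chsum d N -> cheb_coef_fuel fuel p k = d k.
Proof.
elim: fuel => [|f IH] p d N k Hs Hd Hp.
  by rewrite /= (chsum_eq0 Hd) // -Hp; apply/size_poly_leq0P.
have [p0|pn0] := eqVneq p 0.
  have Hz := chsum_eq0 Hd (esym (etrans (esym p0) Hp)).
  rewrite p0 /= size_poly0 lead_coef0 mul0r scale0r subr0 Hz.
  by case: ifP => // _; rewrite (IH 0 d N k) ?Hz ?size_poly0 // -p0.
set M := (size p).-1.
have HsM : size p = M.+1 by rewrite /M prednK // size_poly_gt0.
have Hhigh : forall j, (M < j)%N -> d j = 0.
  by move=> j Hj; apply: (chsum_high Hd); rewrite -Hp HsM.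
have HMN : (M < N)%N by rewrite -HsM Hp; apply: size_chsum.
pose d' := fun j => if j == M then 0 else d j.
have Hsplit := chsum_split d HMN; rewrite -/d' -Hp in Hsplit.
have Hd' : forall j, (M <= j)%N -> d' j = 0.
  by move=> j Hj; rewrite /d'; case: eqP => // /eqP HjM; apply: Hhigh; rewrite ltn_neqAle eq_sym HjM.
have Hs' : (size (chsum d' N) <= M)%N by apply: size_chsum.
have Hlp : lead_coef p = d M * (cheb M)`_M.
  by rewrite lead_coefE -/M {1}Hsplit coefD coefZ (leq_sizeP _ _ Hs') // addr0.
have Hlc : lead_coef (cheb M) = (cheb M)`_M by rewrite lead_coefE size_cheb.
rewrite /= -/M Hlp Hlc mulfK ?cheb_lead //.
case: eqP => [->//|/eqP HkM].
have -> : p - d M *: cheb M = chsum d' N by rewrite {1}Hsplit addrAC subrr add0r.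
rewrite (IH (chsum d' N) d' N k) //.
- by rewrite /d' ifN.
- by apply: leq_trans Hs' _; rewrite -ltnS -HsM.
- by move=> j Hj; rewrite /d'; case: eqP => // _; rewrite Hd.
Qed.

Lemma chexist N : forall p : {poly R}, (size p <= N)%N ->
  exists d, (forall j, (N <= j)%N -> d j = 0) /\ p = chsum d N.
Proof.
elim: N => [|N IH] p Hp.
  exists (fun _ => 0); split => //; rewrite /chsum big_ord0; exact/size_poly_leq0P.
pose c := p`_N / (cheb N)`_N.
have Hp' : (size (p - c *: cheb N)%R <= N)%N.
  apply/leq_sizeP => j Hj; rewrite coefB coefZ.
  have [HNj|HjN] := ltnP N j.
  - by rewrite cheb_gt // mulr0 subr0; move/leq_sizeP: Hp; apply.
  - have -> : j = N by apply/eqP; rewrite eqn_leq HjN Hj.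
    by rewrite /c divfK ?cheb_lead // subrr.
have [d [Hd Ed]] := IH _ Hp'.
exists (fun j => if j == N then c else d j); split.
  move=> j Hj; case: eqP => [E|_]; [by move: Hj; rewrite E ltnn | apply: Hd; exact: ltnW].
rewrite chsumS eqxx -(chsum_ext (d := d)); first by rewrite -Ed subrK.
by move=> j Hj; rewrite ifN // neq_ltn Hj.
Qed.

Lemma cheb_coefE (p : {poly R}) N d k : (size p <= N)%N -> (forall j, (N <= j)%N -> d j = 0) ->
  p = chsum d N -> cheb_coef p k = d k.
Proof. by move=> Hs Hd Hp; apply: (greedy (N := N)). Qed.

Lemma coef_XsubC_exp (c : R) m k : (('X - c%:P) ^+ m)`_k = (- c) ^+ (m - k) *+ 'C(m, k).
Proof.
elim: m k => [|m IH] k.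
  by rewrite expr0 coefC; case: k => [|k] //=; rewrite mulr0n.
rewrite exprS mulrBl coefB coefCM; case: k => [|k].
  by rewrite coefXM /= IH !bin0 !subn0 !mulr1n exprS sub0r mulNr.
rewrite coefXM /= !IH binS mulrnDr addrC subSS; congr (_ + _).
have [Hk|Hk] := ltnP k m.
  by rewrite -mulNr mulrnAr -exprS subnSK.
by rewrite bin_small ?ltnS // !mulr0n mulr0 oppr0.
Qed.

Lemma binRS m i : ('C(m, i.+1))%:R = (m%:R - i%:R) * ('C(m, i))%:R / (i.+1)%:R :> R.
Proof.
apply: (mulIf (x := (i.+1)%:R)); first by rewrite pnatr_eq0.
rewrite divfK ?pnatr_eq0 // mulrC -natrM mul_bin_left.
have [Him|Him] := leqP i m; first by rewrite natrM natrB.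
by rewrite bin_small // muln0 mulr0.
Qed.

Lemma lin4 (T A3 A4 A5 A6 a3 a4 a5 a6 : R) : A3 = 0 -> A4 = 0 -> A5 = 0 -> A6 = 0 ->
  T = a3 * A3 + a4 * A4 + a5 * A5 + a6 * A6 -> T = 0.
Proof. by move=> -> -> -> -> ->; rewrite !mulr0 !addr0. Qed.

Lemma lin6 (T A1 A2 A3 A4 A5 A6 a2 a3 a4 a5 a6 : R) : A1 = 0 -> A2 = 0 -> A3 = 0 -> A4 = 0 ->
  A5 = 0 -> A6 = 0 ->
  T = A1 + a2 * A2 + a3 * A3 + a4 * A4 + a5 * A5 + a6 * A6 -> T = 0.
Proof. by move=> -> -> -> -> -> -> ->; rewrite !mulr0 !addr0. Qed.

Lemma sum7 p (Fn : nat -> R) : (forall j, (j <= p)%N -> Fn j = 0) ->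
  \sum_(j < p + 7) Fn j = Fn (p+1)%N + Fn (p+2)%N + Fn (p+3)%N + Fn (p+4)%N + Fn (p+5)%N + Fn (p+6)%N.
Proof.
move=> H; rewrite -(big_mkord xpredT) !(addnS p) !big_nat_recr ?leq_addr //= addn0.
rewrite big1_seq ?add0r ?(H p) ?add0r //.
by move=> j; rewrite mem_index_iota => /andP[_ Hj]; apply: H; apply: ltnW.
Qed.

Definition cval p a b : R :=
  if (a < b)%N then 0 else if odd (a + b) then 0 else
  if (a == b) && (0 < a)%N then 2%:R ^+ p * 2%:R ^+ a.-1
  else if a == b.+2 then - (p + a)%:R * (2%:R ^+ p * 2%:R ^+ a.-1) / 4%:R
  else if a == b.+4 then (p + a)%:R * (p + b.+1)%:R * (2%:R ^+ p * 2%:R ^+ a.-1) / 32%:R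
  else (cheb (p + a))`_(p + b).

Lemma cheb_val p a b : (cheb (p + a))`_(p + b) = cval p a b.
Proof.
rewrite /cval; case: ltnP => Hab; first by rewrite cheb_gt // ltn_add2l.
case: ifP => Ho.
  by rewrite cheb_odd // addnACA addnn oddD odd_double.
case: andP => [[/eqP <- Ha]|_].
  case: a Ha {Hab Ho} => // a _; by rewrite addnS cheb_top exprD.
case: ifP => [/eqP ->|_]; first by rewrite !addnS cheb_sub2 -!addnS exprD.
case: ifP => [/eqP ->|_] //; by rewrite !addnS cheb_sub4 -!addnS exprD.
Qed.

Lemma bval (c : R) p a b : (('X - c%:P) ^+ (p + a))`_(p + b) =
  if (a < b)%N then 0 else (- c) ^+ (a - b) * ('C(p + a, a - b))%:R.
Proof.
rewrite coef_XsubC_exp subnDl; case: ltnP => Hab.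
  by rewrite bin_small ?mulr0n // ltn_add2l.
have E : (p + a - (a - b) = p + b)%N by lia.
by rewrite -mulr_natr -[in RHS](@bin_sub (p + a) (a - b)) ?E //; lia.
Qed.

Lemma lin1 (T A a : R) : A = 0 -> T = a * A -> T = 0.
Proof. by move=> -> ->; rewrite mulr0. Qed.
End S.

Theorem lemma3p4 (R : realFieldType) (F : {poly R}) (delta : R) (n : nat) :
  let Q := F \Po (('X - delta%:P) ^+ 2) in
  (size Q).-1 = n -> (6 <= n)%N ->
  ((Ch 2 Q = 0 -> Ch 3 Q = 0 ->
      delta = 0 \/
      (2%:R * delta) ^+ 2 = 3%:R / ((n%:R - 1) * (n%:R - 2%:R))) /\
   (Ch 2 Q = 0 -> Ch 4 Q = 0 -> Ch 5 Q = 0 ->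
      delta = 0 \/
      let t := 2%:R * delta in
      2%:R / 15%:R * (n%:R - 1) * (n%:R - 2%:R) * (n%:R - 3%:R) * (n%:R - 4%:R) * t ^+ 4
        - (n%:R - 2%:R) * (n%:R - 3%:R) * t ^+ 2 + 1 = 0)).
Proof.
move=> Q Hn H6.
have [G HGdef] : {G | G = F \Po 'X^2} by exists (F \Po 'X^2).
have QG : Q = G \Po ('X - delta%:P) by rewrite HGdef /Q -comp_Xn_poly comp_polyA.
have HsQ : size Q = n.+1 by move: Hn; case: (size Q) => [|s] /= E; lia.
have HsG : size G = n.+1 by rewrite -HsQ QG (@size_comp_poly2 _ G) // size_XsubC.
have [p Ep] : exists p, n = (p + 6)%N by exists (n - 6)%N; lia.
clear Hn; subst n.
have HG : forall j, G`_j = if (2 %| j)%N then F`_(j %/ 2)%N else 0.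
  by move=> j; rewrite HGdef coef_comp_poly_Xn.
have fn0 : G`_(p + 6) != 0.
  have : G != 0 by rewrite -size_poly_gt0 HsG.
  by rewrite -lead_coef_eq0 lead_coefE HsG.
have Hp2 : (2 %| p)%N.
  by move: fn0; rewrite HG; case: ifP => [|_]; [rewrite dvdn_addl | rewrite eqxx].
have G5 : G`_(p + 5) = 0 by rewrite HG dvdn_addr.
have G3 : G`_(p + 3) = 0 by rewrite HG dvdn_addr.
have G1 : G`_(p + 1) = 0 by rewrite HG dvdn_addr.
have HsQ7 : (size Q <= p + 7)%N by rewrite HsQ; lia.
have [d [Hd EQ]] := chexist HsQ7.
have ChE : forall i, Ch i Q = d (p + 6 - i)%N.
  by move=> i; rewrite /Ch (cheb_coefE _ HsQ7 Hd EQ) HsQ.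
have key : forall b, (0 < b)%N ->
  G`_(p + 1) * (('X - delta%:P) ^+ (p + 1))`_(p + b) +
  G`_(p + 2) * (('X - delta%:P) ^+ (p + 2))`_(p + b) +
  G`_(p + 3) * (('X - delta%:P) ^+ (p + 3))`_(p + b) +
  G`_(p + 4) * (('X - delta%:P) ^+ (p + 4))`_(p + b) +
  G`_(p + 5) * (('X - delta%:P) ^+ (p + 5))`_(p + b) +
  G`_(p + 6) * (('X - delta%:P) ^+ (p + 6))`_(p + b) -
  (d (p + 1)%N * (cheb R (p + 1))`_(p + b) +
   d (p + 2)%N * (cheb R (p + 2))`_(p + b) +
   d (p + 3)%N * (cheb R (p + 3))`_(p + b) +
   d (p + 4)%N * (cheb R (p + 4))`_(p + b) +
   d (p + 5)%N * (cheb R (p + 5))`_(p + b) +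
   d (p + 6)%N * (cheb R (p + 6))`_(p + b)) = 0.
  move=> b Hb; apply/eqP; rewrite subr_eq0; apply/eqP.
  have E1 := congr1 (fun q : {poly R} => q`_(p + b)) QG.
  have E2 := congr1 (fun q : {poly R} => q`_(p + b)) EQ.
  rewrite /= (coef_comp_poly G) HsG -addnS (sum7 (Fn := fun j => G`_j * (('X - delta%:P) ^+ j)`_(p + b))) in E1.
    rewrite -E1 EQ /chsum coef_sum.
    rewrite (sum7 (Fn := fun j => (d j *: cheb R j)`_(p + b))) /=; first by rewrite !coefZ.
    by move=> j Hj; rewrite coefZ cheb_gt ?mulr0 //; lia.
  by move=> j Hj; rewrite coef_XsubC_exp bin_small ?mulr0n ?mulr0 //; lia.
have e6 := key 6 isT; have e5 := key 5 isT; have e4 := key 4 isT.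
have e3 := key 3 isT; have e2 := key 2 isT; have e1 := key 1 isT.
rewrite !bval !cheb_val /cval /= G5 G3 G1 !binRS !bin0 ?natrD !subSS !subn0 in e6 e5 e4 e3 e2 e1.
have D2 : Ch 2 Q = d (p + 4)%N by rewrite ChE; congr d; lia.
have D3 : Ch 3 Q = d (p + 3)%N by rewrite ChE; congr d; lia.
have D4 : Ch 4 Q = d (p + 2)%N by rewrite ChE; congr d; lia.
have D5 : Ch 5 Q = d (p + 1)%N by rewrite ChE; congr d; lia.
rewrite D2 D3 D4 D5 natrD.
set f := G`_(p + 6) in e1 e2 e3 e4 e5 e6 fn0.
set nR := (p%:R + 6%:R) in e1 e2 e3 e4 e5 e6 *.
have nR0 : nR != 0 by rewrite /nR; apply/eqP => H; have := ler0n R p; lra.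
have nR1 : nR - 1 != 0 by rewrite /nR; apply/eqP => H; have := ler0n R p; lra.
have nR2 : nR - 2%:R != 0 by rewrite /nR; apply/eqP => H; have := ler0n R p; lra.
split.
- move=> C2 C3; rewrite C2 C3 in e3 e4.
  have T1 : delta * (f * (nR * (nR - 1) * (nR - 2%:R) * delta ^+ 2 / 3%:R - nR / 4%:R)) = 0.
    apply: (lin4 (a3 := 1) (a4 := (nR - 2%:R) * delta) (a5 := (nR - 1) / 4%:R)
      (a6 := nR * (nR - 2%:R) * delta / 4%:R) e3 e4 e5 e6).
    by rewrite /nR; field.
  move/eqP: T1; rewrite mulf_eq0 => /orP[/eqP->|]; first by left.
  rewrite mulf_eq0 (negbTE fn0) /= => /eqP Hb; right.
  apply/eqP; rewrite -subr_eq0; apply/eqP.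
  apply: (lin1 (a := 12%:R / (nR * (nR - 1) * (nR - 2%:R))) Hb).
  by field; rewrite nR0 nR1 nR2.
- move=> C2 C4 C5; rewrite C2 C4 C5 in e1 e2 e4.
  pose Pe := 2%:R / 15%:R * (nR - 1) * (nR - 2%:R) * (nR - 3%:R) * (nR - 4%:R) * (2%:R * delta) ^+ 4
        - (nR - 2%:R) * (nR - 3%:R) * (2%:R * delta) ^+ 2 + 1.
  pose a4 := - (delta ^+ 3 * ((nR - 2%:R) * (nR - 3%:R) * (nR - 4%:R) / 3%:R)
                - (nR - 3%:R) * (nR - 2%:R) * delta / 4%:R).
  have T2 : - (nR / 16%:R) * (delta * (f * Pe)) = 0.
    apply: (lin6 (a2 := (nR - 4%:R) * delta) (a3 := (nR - 3%:R) / 4%:R) (a4 := a4)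
      (a5 := (nR - 1) * (nR - 2%:R) / 32%:R)
      (a6 := (- (nR - 4%:R) * nR * (nR - 3%:R) * delta + 8%:R * nR * a4) / 32%:R)
      e1 e2 e3 e4 e5 e6).
    by rewrite /a4 /Pe /nR; field.
  move/eqP: T2; rewrite mulf_eq0 oppr_eq0 mulf_eq0 (negbTE nR0) invr_eq0 pnatr_eq0 /=.
  rewrite mulf_eq0 => /orP[/eqP->|]; first by left.
  rewrite mulf_eq0 (negbTE fn0) /= => /eqP HP; right.
  exact: HP.
Qed.
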